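(* Let $(G,\Omega)$ be an ample transitive $\ell$-permutation group whose root system $T$ has no minimal element. Let $\Delta\in T$ and $h\in Q_\Delta$. (a) Let $\Delta'\in T$ with $\Delta'\subsetneq\Delta$ and $\Delta'h\neq\Delta'$, and let $1\neq g\in\mathrm{rst}(\Delta')$. Then (i) $[h^{-1},h^g]\neq1$ (in particular $X_h\neq\{1\}$); and (ii) if $f\in G$ and $[[h^{-1},h^g],f]=1$ then $\Delta'f=\Delta'$; in particular every $f$ in the centralizer $\mathrm C_G(X_h)$ satisfies $\Delta'f=\Delta'$. (b) If $\beta\in\mathrm{supp}(h)$ and $f\in G$, then either $\beta f=\beta$ or $[[h^{-1},h^g],f]\neq1$ for some $g\in\mathrm{rst}(\Delta)$.
   Context: An $\ell$-permutation group $(G,\Omega)$: a totally ordered set $\Omega$ with a subgroup $G$ of $\mathrm{Aut}(\Omega,\leqslant)$ (right action) closed under pointwise max and min; transitive if $G$ is transitive on $\Omega$. $\mathrm{supp}(g)=\{\alpha:\alpha g\neq\alpha\}$, $g^f=f^{-1}gf$, $[a,b]=a^{-1}b^{-1}ab$. A convex congruence is a $G$-invariant equivalence relation with convex classes; these are totally ordered by inclusion. For $\alpha\neq\beta$, $V(\alpha,\beta)$ is the intersection of all convex congruences in which $\alpha,\beta$ lie in the same class. $T$ is the set of all classes of the congruences $V(\alpha,\beta)$ ($\alpha\ne\beta$), partially ordered by inclusion; for $\Delta\in T$, $\kappa(\Delta)$ is the congruence $V(\alpha,\beta)$ having $\Delta$ as a class. $\mathrm{rst}(\Delta)=\{g:\mathrm{supp}(g)\subseteq\Delta\}$.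 $Q_\Delta=\{h\in\mathrm{rst}(\Delta):\exists\alpha\in\Delta,\ V(\alpha,\alpha h)=\kappa(\Delta)\}$; $(G,\Omega)$ is ample if $Q_\Delta\neq\emptyset$ for all $\Delta\in T$. For $h\in Q_\Delta$, $X_h=\{[h^{-1},h^g]:g\in G\}$. *)

(* Defs.v *)
Set Implicit Arguments.

(* A bijection of Omega, packaged with its inverse. Right action: alpha g = pf g alpha. *)
Record perm (Omega : Type) := Perm {
  pf : Omega -> Omega;
  pinv : Omega -> Omega;
  pf_pinv : forall x, pf (pinv x) = x;
  pinv_pf : forall x, pinv (pf x) = x
}.

Section LPerm.
Variable Omega : Type.

Definition act (alpha : Omega) (g : perm Omega) : Omega := pf g alpha.

Definition pone : perm Omega :=
  @Perm Omega (fun x => x) (fun x => x) (fun _ => eq_refl) (fun _ => eq_refl).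

(* product gh : first g, then h  (alpha (g h) = (alpha g) h) *)
Definition pmul (g h : perm Omega) : perm Omega.
Proof.
  refine (@Perm Omega (fun x => pf h (pf g x)) (fun x => pinv g (pinv h x)) _ _).
  - intro x. rewrite pf_pinv. apply pf_pinv.
  - intro x. rewrite pinv_pf. apply pinv_pf.
Defined.

Definition pinvg (g : perm Omega) : perm Omega :=
  @Perm Omega (pinv g) (pf g) (pinv_pf g) (pf_pinv g).

Definition conj (g f : perm Omega) : perm Omega := pmul (pinvg f) (pmul g f).

Definition comm (a b : perm Omega) : perm Omega :=
  pmul (pmul (pinvg a) (pinvg b)) (pmul a b).

Definition is_id (g : perm Omega) : Prop := forall alpha, act alpha g = alpha.

Variable le : Omega -> Omega -> Prop.

Definition total_order : Prop :=
  (forall x, le x x) /\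
  (forall x y, le x y -> le y x -> x = y) /\
  (forall x y z, le x y -> le y z -> le x z) /\
  (forall x y, le x y \/ le y x).

Variable G : perm Omega -> Prop.

Definition is_lperm_group : Prop :=
  total_order /\
  (forall g, G g -> forall x y, le x y <-> le (act x g) (act y g)) /\
  G pone /\
  (forall g h, G g -> G h -> G (pmul g h)) /\
  (forall g, G g -> G (pinvg g)) /\
  (* closed under pointwise max *)
  (forall g h, G g -> G h -> exists k, G k /\ forall alpha,
      (le (act alpha g) (act alpha h) -> act alpha k = act alpha h) /\
      (le (act alpha h) (act alpha g) -> act alpha k = act alpha g)) /\
  (* closed under pointwise min *)
  (forall g h, G g -> G h -> exists k, G k /\ forall alpha,
      (le (act alpha g) (act alpha h) -> act alpha k = act alpha g) /\
      (le (act alpha h) (act alpha g) -> act alpha k = act alpha h)).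

Definition transitive : Prop :=
  forall alpha beta, exists g, G g /\ act alpha g = beta.

Definition convex_congruence (E : Omega -> Omega -> Prop) : Prop :=
  (forall x, E x x) /\ (forall x y, E x y -> E y x) /\
  (forall x y z, E x y -> E y z -> E x z) /\
  (forall x y g, G g -> E x y -> E (act x g) (act y g)) /\
  (forall x y z, E x y -> le x z -> le z y -> E x z).

Definition V (alpha beta : Omega) : Omega -> Omega -> Prop :=
  fun x y => forall E, convex_congruence E -> E alpha beta -> E x y.

Definition is_class_of (E : Omega -> Omega -> Prop) (Delta : Omega -> Prop) : Prop :=
  exists gamma, forall x, Delta x <-> E gamma x.

Definition inT (Delta : Omega -> Prop) : Prop :=
  exists alpha beta, alpha <> beta /\ is_class_of (V alpha beta) Delta.

Definition subset (A B : Omega -> Prop) : Prop := forall x, A x -> B x.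
Definition psubset (A B : Omega -> Prop) : Prop := subset A B /\ exists x, B x /\ ~ A x.

Definition is_kappa (Delta : Omega -> Prop) (E : Omega -> Omega -> Prop) : Prop :=
  exists a b, a <> b /\ (forall x y, E x y <-> V a b x y) /\ is_class_of E Delta.

Definition rst (Delta : Omega -> Prop) (g : perm Omega) : Prop :=
  G g /\ forall alpha, act alpha g <> alpha -> Delta alpha.

Definition Q (Delta : Omega -> Prop) (h : perm Omega) : Prop :=
  rst Delta h /\ exists alpha, Delta alpha /\ is_kappa Delta (V alpha (act alpha h)).

Definition ample : Prop := forall Delta, inT Delta -> exists h, Q Delta h.

Definition T_no_minimal : Prop :=
  forall Delta, inT Delta -> exists Delta', inT Delta' /\ psubset Delta' Delta.

Definition set_fixed (Delta : Omega -> Prop) (f : perm Omega) : Prop :=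
  forall x, (exists alpha, Delta alpha /\ act alpha f = x) <-> Delta x.

End LPerm.

(* Main.v *)
Require Import Defs.
From Stdlib Require Import Classical.

Lemma pf_inj {O} (g : perm O) x y : pf g x = pf g y -> x = y.
Proof. intro H. rewrite <- (pinv_pf g x), <- (pinv_pf g y), H. reflexivity. Qed.
Lemma pinv_inj {O} (g : perm O) x y : pinv g x = pinv g y -> x = y.
Proof. intro H. rewrite <- (pf_pinv g x), <- (pf_pinv g y), H. reflexivity. Qed.

Definition cfun {O} (h g : perm O) (x : O) :=
  pf g (pf h (pinv g (pinv h (pf g (pinv h (pinv g (pf h x))))))).

Lemma comm_pf {O} (h g : perm O) x :
  pf (comm (pinvg h) (conj h g)) x = cfun h g x.
Proof. reflexivity. Qed.

Lemma comm_id_commute {O} (c f : perm O) :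
  is_id (comm c f) -> forall z, pf f (pf c z) = pf c (pf f z).
Proof.
  intros H z. specialize (H (pf c (pf f z))). unfold act in H. cbn in H.
  rewrite pinv_pf, pinv_pf in H. exact H.
Qed.

Section G1.
Context {O : Type} (D : O -> Prop) (g : perm O) (HgD : forall a, pf g a <> a -> D a).
Lemma g_out y : ~ D y -> pf g y = y.
Proof. intro Hy. apply NNPP. intro H. exact (Hy (HgD y H)). Qed.
Lemma g_in y : D y -> D (pf g y).
Proof. intro Hy. apply NNPP. intro H. assert (pf g (pf g y) = pf g y) by (apply g_out; auto).
  apply pf_inj in H0. rewrite H0 in H. auto. Qed.
Lemma ginv_out y : ~ D y -> pinv g y = y.
Proof. intro Hy. destruct (classic (D (pinv g y))) as [H|H].
  - apply g_in in H. rewrite pf_pinv in H. contradiction.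
  - apply g_out in H. rewrite pf_pinv in H. congruence. Qed.
Lemma ginv_in y : D y -> D (pinv g y).
Proof. intro Hy. apply NNPP. intro H. pose proof (g_out _ H) as H1.
  rewrite pf_pinv in H1. rewrite <- H1 in H. auto. Qed.
End G1.

Section C.
Context {O : Type} (D : O -> Prop) (g h : perm O) (HgD : forall a, pf g a <> a -> D a)
  (Hout : forall z, D z -> ~ D (pf h z)) (Hout' : forall z, D z -> ~ D (pinv h z)).

Lemma c_on_D x : D x -> cfun h g x = pf g (pf g x).
Proof. intro Hx. unfold cfun.
  rewrite (ginv_out D g HgD (pf h x)) by auto. rewrite (pinv_pf h).
  assert (D (pf g x)) by (apply (g_in D); auto).
  rewrite (ginv_out D g HgD (pinv h (pf g x))) by auto. rewrite (pf_pinv h).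
  reflexivity. Qed.

Lemma c_fix y : ~ D y -> ~ D (pf h y) -> ~ D (pinv h y) -> cfun h g y = y.
Proof. intros H1 H2 H3. unfold cfun.
  rewrite (ginv_out D g HgD (pf h y)) by auto. rewrite (pinv_pf h).
  rewrite (g_out D g HgD y) by auto.
  rewrite (ginv_out D g HgD (pinv h y)) by auto. rewrite (pf_pinv h).
  rewrite (g_out D g HgD y) by auto. reflexivity. Qed.

Lemma c_hx x : D x -> ~ D (pf h (pf h x)) -> cfun h g (pf h x) = pf h (pinv g x).
Proof. intros Hx H2. unfold cfun.
  rewrite (ginv_out D g HgD (pf h (pf h x))) by auto. rewrite (pinv_pf h).
  rewrite (g_out D g HgD (pf h x)) by auto. rewrite (pinv_pf h).
  assert (D (pinv g x)) by (apply (ginv_in D); auto).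
  rewrite (g_out D g HgD (pf h (pinv g x))) by auto. reflexivity. Qed.

Lemma c_hinvx x : D x -> ~ D (pinv h (pinv h (pinv g x))) ->
  cfun h g (pinv h x) = pinv h (pinv g x).
Proof. intros Hx H2. unfold cfun. rewrite (pf_pinv h).
  assert (D (pinv g x)) by (apply (ginv_in D); auto).
  rewrite (g_out D g HgD (pinv h (pinv g x))) by auto.
  rewrite (ginv_out D g HgD _ H2). rewrite (pf_pinv h).
  rewrite (g_out D g HgD (pinv h (pinv g x))) by auto. reflexivity. Qed.
End C.

Section Core.
Context {O : Type} (le : O -> O -> Prop) (G : perm O -> Prop) (E : O -> O -> Prop) (gm : O)
  (Hantis : forall a b, le a b -> le b a -> a = b)
  (Htr : forall a b c, le a b -> le b c -> le a c)
  (Htot : forall a b, le a b \/ le b a)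
  (Hord : forall k, G k -> forall a b, le a b <-> le (pf k a) (pf k b))
  (Erefl : forall a, E a a) (Esym : forall a b, E a b -> E b a)
  (Etr : forall a b c, E a b -> E b c -> E a c)
  (Einv : forall a b k, G k -> E a b -> E (pf k a) (pf k b))
  (Econv : forall a b z, E a b -> le a z -> le z b -> E a z)
  (h g f : perm O) (Gh : G h) (Ghi : G (pinvg h)) (Gf : G f) (Gfi : G (pinvg f))
  (Hout : forall z, E gm z -> ~ E gm (pf h z)) (Hout' : forall z, E gm z -> ~ E gm (pinv h z))
  (HgD : forall a, pf g a <> a -> E gm a).

Lemma convA p q r : E p q -> ~ E p r -> le p r -> le q r.
Proof. intros H1 H2 H3. destruct (Htot q r); auto. exfalso. apply H2.
  apply (Econv p q r); auto. Qed.
Lemma convB p q r : E p q -> ~ E p r -> le r p -> le r q.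
Proof. intros H1 H2 H3. destruct (Htot r q); auto. exfalso. apply H2.
  apply (Etr p q r); auto. apply (Econv q p r); auto. Qed.

Lemma Einvi a b : E a b -> E (pinv h a) (pinv h b).
Proof. intro H. exact (Einv a b (pinvg h) Ghi H). Qed.

Variable x : O.
Hypothesis Hx : E gm x.
Hypothesis Hdir : le x (pf h x).

Lemma O1 u w : E gm u -> E gm (pinv h w) -> le u w.
Proof. intros Hu Hw.
  assert (A1 : le u (pf h x)).
  { apply (convA x u (pf h x)); eauto. intro H. apply (Hout x Hx). eauto. }
  assert (A2 : E (pf h x) w).
  { pose proof (Einv x (pinv h w) h Gh) as H. rewrite pf_pinv in H. apply H. eauto. }
  apply (convB (pf h x) w u); auto.
  intro H. apply Einvi in H. rewrite pinv_pf in H. apply (Hout' u Hu). eauto.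
Qed.

Lemma O2 u v : E gm (pf h u) -> E gm v -> le u v.
Proof. intros Hu Hv. apply (Hord h Gh). apply O1; auto. rewrite pinv_pf. auto. Qed.

Hypothesis Hgx : pf g x <> x.
Hypothesis Hcomm : forall z, pf f (cfun h g z) = cfun h g (pf f z).

Lemma hx_ne : pf h x <> x.
Proof. intro H. apply (Hout x Hx). rewrite H. auto. Qed.
Lemma ginvx_ne : pinv g x <> x.
Proof. intro H. apply Hgx. rewrite <- H at 1. rewrite pf_pinv. auto. Qed.

Lemma supp3 y : cfun h g y <> y -> E gm y \/ E gm (pf h y) \/ E gm (pinv h y).
Proof. intro H. apply NNPP. intro H'. apply H. apply (c_fix (E gm)); auto;
  intro; apply H'; auto. Qed.

Lemma supp3' y : cfun h g y <> y -> E gm y \/ E gm (pinv h y) \/ E gm (pf h y).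
Proof. intro H. destruct (supp3 y H) as [?|[?|?]]; tauto. Qed.

Lemma moved z : cfun h g z <> z -> cfun h g (pf f z) <> pf f z.
Proof. intros H H'. rewrite <- Hcomm in H'. apply pf_inj in H'. auto. Qed.

Hypothesis Hggx : pf g (pf g x) <> x.

Lemma core_ii : E gm (pf f x).
Proof.
  assert (Hfx : cfun h g (pf f x) <> pf f x).
  { apply moved. rewrite (c_on_D (E gm)); auto. }
  destruct (supp3 _ Hfx) as [H|[H|H]]; [exact H| |].
  -
    exfalso.
    set (z := pinv h x).
    assert (Hgi : E gm (pinv g x)) by (apply (ginv_in (E gm)); auto).
    assert (Hn : ~ E gm (pinv h (pinv h (pinv g x)))).
    { intro Hc. set (y := pinv g x) in *.
      assert (L1 : le (pinv h y) (pinv h (pinv h y))) by (apply O2; [rewrite pf_pinv|]; auto).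
      assert (L2 : le (pinv h y) y) by (apply O2; [rewrite pf_pinv|]; auto).
      apply (Hord (pinvg h) Ghi) in L2. cbn in L2.
      assert (pinv h y = y). { apply (pinv_inj h). apply Hantis; auto. }
      apply (Hout' y Hgi). rewrite H0. auto. }
    assert (Hz : cfun h g z <> z).
    { unfold z. rewrite (c_hinvx (E gm)); auto. intro Hc. apply pinv_inj in Hc.
      apply ginvx_ne; auto. }
    apply moved in Hz.
    assert (Lzx : le (pf f z) (pf f x)).
    { apply (proj1 (Hord f Gf z x)). apply O2; [unfold z; rewrite pf_pinv|]; auto. }
    assert (Hneq : pf f z <> pf f x).
    { intro Hc. apply pf_inj in Hc. apply (Hout' x Hx). fold z. rewrite Hc. auto. }
    destruct (supp3' _ Hz) as [H2|[H2|H2]].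
    + apply Hneq, Hantis; auto. exact (O2 _ _ H H2).
    + apply Hneq, Hantis; auto. exact (Htr _ gm _ (O2 _ _ H (Erefl gm)) (O1 _ _ (Erefl gm) H2)).
    + apply (Hout' x Hx). fold z.
      assert (E (pf h (pf f x)) (pf h (pf f z))) by eauto.
      apply Einvi in H0. rewrite !pinv_pf in H0.
      apply (Einv _ _ (pinvg f) Gfi) in H0. cbn in H0. rewrite !pinv_pf in H0. eauto.
  -
    exfalso.
    set (z := pf h x).
    assert (Hn : ~ E gm (pf h (pf h x))).
    { intro Hc. assert (L1 : le (pf h (pf h x)) (pf h x)) by (apply O1; [|rewrite pinv_pf]; auto).
      assert (L2 := Hdir). apply (Hord h Gh) in L2.
      apply hx_ne. apply (pf_inj h). apply Hantis; auto. }
    assert (Hz : cfun h g z <> z).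
    { unfold z. rewrite (c_hx (E gm)); auto. intro Hc. apply pf_inj in Hc.
      apply ginvx_ne; auto. }
    apply moved in Hz.
    assert (Lxz : le (pf f x) (pf f z)) by exact (proj1 (Hord f Gf x z) Hdir).
    assert (Hneq : pf f z <> pf f x).
    { intro Hc. apply pf_inj in Hc. apply hx_ne. auto. }
    destruct (supp3' _ Hz) as [H2|[H2|H2]].
    + apply Hneq, Hantis; auto. exact (O1 _ _ H2 H).
    + apply (Hout x Hx). fold z.
      assert (E (pinv h (pf f x)) (pinv h (pf f z))) by eauto.
      apply (Einv _ _ h Gh) in H0. rewrite !pf_pinv in H0.
      apply (Einv _ _ (pinvg f) Gfi) in H0. cbn in H0. rewrite !pinv_pf in H0. eauto.
    + apply Hneq, Hantis; auto. exact (Htr _ gm _ (O2 _ _ H2 (Erefl gm)) (O1 _ _ (Erefl gm) H)).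
Qed.
End Core.

Lemma sf_lemma {O} (le : O -> O -> Prop) G E Delta gm f
  (HE : convex_congruence le G E) (HD : forall x, Delta x <-> E gm x)
  (Gf : G f) (Gfi : G (pinvg f)) x (Hx : Delta x) (Hfx : Delta (pf f x)) :
  set_fixed Delta f.
Proof.
  destruct HE as (Er & Es & Et & Ei & Ec).
  apply HD in Hx. apply HD in Hfx.
  intro y. split.
  - intros (a & Ha & <-). apply HD in Ha. apply HD. unfold act.
    apply (Et _ (pf f x)); auto. apply Ei; auto. eauto.
  - intro Hy. apply HD in Hy. exists (pinv f y). split.
    + apply HD. apply (Et _ x); auto.
      pose proof (Ei (pf f x) y (pinvg f) Gfi) as H. cbn in H. rewrite pinv_pf in H.
      apply H. eauto.
    + unfold act. apply pf_pinv.
Qed.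

Lemma A_core {O} (le : O -> O -> Prop) (G : perm O -> Prop)
  (Hto : total_order le)
  (Hord : forall g, G g -> forall x y, le x y <-> le (act x g) (act y g))
  (Ginv : forall g, G g -> G (pinvg g))
  E (HE : convex_congruence le G E) Delta gm (HD : forall x, Delta x <-> E gm x)
  h (Gh : G h) (Hnf : ~ set_fixed Delta h) g (Hg : rst G Delta g) (Hng : ~ is_id g) :
  ~ is_id (comm (pinvg h) (conj h g)) /\
  (forall f, G f -> is_id (comm (comm (pinvg h) (conj h g)) f) -> set_fixed Delta f).
Proof.
  destruct Hto as (_ & Hantis & Htr & Htot).
  destruct Hg as (Gg & HgD).
  assert (HgD' : forall a, pf g a <> a -> E gm a) by (intros a Ha; apply (proj1 (HD a)), HgD, Ha).
  destruct (not_all_ex_not _ _ Hng) as (x & Hgx). unfold act in Hgx.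
  assert (Hx : E gm x) by auto.
  pose proof HE as HE'. destruct HE' as (Er & Es & Et & Ei & Ec).
  assert (Hout : forall z, E gm z -> ~ E gm (pf h z)).
  { intros z H1 H2. apply Hnf. apply (sf_lemma le G E Delta gm h HE HD Gh (Ginv h Gh) z); apply HD; auto. }
  assert (Hout' : forall z, E gm z -> ~ E gm (pinv h z)).
  { intros z H1 H2. apply (Hout _ H2). rewrite pf_pinv. auto. }
  assert (Hggx : pf g (pf g x) <> x).
  { intro H. destruct (Htot x (pf g x)) as [H1|H1].
    - pose proof (proj1 (Hord g Gg _ _) H1) as H2. unfold act in H2. rewrite H in H2. auto.
    - pose proof (proj1 (Hord g Gg _ _) H1) as H2. unfold act in H2. rewrite H in H2. auto. }
  split.
  - intro Hid. specialize (Hid x). unfold act in Hid. rewrite comm_pf in Hid.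
    rewrite (c_on_D (E gm)) in Hid; auto.
  - intros f Gf Hid.
    assert (Hcomm : forall z, pf f (cfun h g z) = cfun h g (pf f z))
      by (intro z; exact (comm_id_commute _ _ Hid z)).
    assert (Hfx : E gm (pf f x)).
    { destruct (Htot x (pf h x)) as [Hdir|Hdir].
      - apply (core_ii le G E gm Hantis Htr Htot Hord Er Es Et Ei Ec h g f Gh (Ginv h Gh) Gf (Ginv f Gf) Hout Hout' HgD' x); auto.
      - assert (A1 : forall a b c, le b a -> le c b -> le c a) by (intros a b c H1 H2; eauto).
        assert (A2 : forall a b, le b a \/ le a b) by (intros a b; destruct (Htot a b); auto).
        assert (A3 : forall k, G k -> forall a b, le b a <-> le (pf k b) (pf k a))
          by (intros k Gk a b; apply (Hord k Gk b a)).
        assert (A4 : forall a b z, E a b -> le z a -> le b z -> E a z)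
          by (intros a b z H1 H2 H3; apply (Et _ b); auto; apply (Ec b a z); auto).
        exact (core_ii (fun a b => le b a) G E gm (fun a b H1 H2 => Hantis a b H2 H1) A1 A2 A3
          Er Es Et Ei A4 h g f Gh (Ginv h Gh) Gf (Ginv f Gf) Hout Hout' HgD' x Hx Hdir Hgx Hcomm Hggx). }
    apply (sf_lemma le G E Delta gm f HE HD Gf (Ginv f Gf) x); apply HD; auto.
Qed.

Lemma V_cc {O} (le : O -> O -> Prop) G a b : convex_congruence le G (V le G a b).
Proof.
  unfold V. split; [|split; [|split; [|split]]].
  - intros x E (Er&Es&Et&Ei&Ec) _. apply Er.
  - intros x y H E HE Hab. pose proof HE as (Er&Es&Et&Ei&Ec). exact (Es x y (H E HE Hab)).
  - intros x y z H1 H2 E HE Hab. pose proof HE as (Er&Es&Et&Ei&Ec).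
    exact (Et x y z (H1 E HE Hab) (H2 E HE Hab)).
  - intros x y g Gg H E HE Hab. pose proof HE as (Er&Es&Et&Ei&Ec). exact (Ei x y g Gg (H E HE Hab)).
  - intros x y z H1 H2 H3 E HE Hab. pose proof HE as (Er&Es&Et&Ei&Ec).
    exact (Ec x y z (H1 E HE Hab) H2 H3).
Qed.

Lemma V_min {O} (le : O -> O -> Prop) G E a b :
  convex_congruence le G E -> E a b -> forall x y, V le G a b x y -> E x y.
Proof. intros HE Hab x y H. apply H; auto. Qed.

Lemma V_ab {O} (le : O -> O -> Prop) G a b : V le G a b a b.
Proof. intros E _ H; exact H. Qed.

Lemma V_eq {O} (le : O -> O -> Prop) G (Hantis : forall x y, le x y -> le y x -> x = y) a x y :
  V le G a a x y -> x = y.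
Proof. intro H. apply H; auto. split; [|split; [|split; [|split]]]; intros.
  - reflexivity.
  - congruence.
  - congruence.
  - subst; reflexivity.
  - subst. apply Hantis; auto.
Qed.

Lemma refineL {O} (le : O -> O -> Prop) G (Htr : transitive G) (HnoMin : T_no_minimal le G)
  a b (Hab : a <> b) :
  exists u v, u <> v /\ (forall x y, V le G u v x y -> V le G a b x y) /\ ~ V le G u v a b.
Proof.
  set (D1 := fun x => V le G a b a x).
  assert (HT : inT le G D1) by (exists a, b; split; auto; exists a; intro; tauto).
  destruct (HnoMin D1 HT) as (D2 & (a' & b' & Hab' & g2 & HD2) & Hsub & x0 & Hx0 & Hnx0).
  destruct (Htr a' g2) as (k & Gk & Hk).
  exists g2, (act b' k). split; [|split].
  - intro H. rewrite <- Hk in H. unfold act in H. apply pf_inj in H. auto.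
  - assert (HV2 : V le G a' b' g2 (act b' k)).
    { rewrite <- Hk. apply (V_cc le G a' b'); auto. apply V_ab. }
    assert (Hu : D1 g2) by (apply Hsub, HD2, (proj1 (V_cc le G a' b') g2)).
    assert (Hv : D1 (act b' k)) by (apply Hsub, HD2, HV2).
    unfold D1 in Hu, Hv.
    apply V_min. apply V_cc.
    destruct (V_cc le G a b) as (Er&Es&Et&Ei&Ec). eauto.
  - intro H.
    assert (HV2 : V le G a' b' g2 (act b' k)).
    { rewrite <- Hk. apply (V_cc le G a' b'); auto. apply V_ab. }
    assert (Hu : D1 g2) by (apply Hsub, HD2, (proj1 (V_cc le G a' b') g2)).
    apply Hnx0. apply HD2.
    apply (V_min le G (V le G a' b') g2 (act b' k)); [apply V_cc | exact HV2|].
    apply (V_min le G (V le G g2 (act b' k)) a b); [apply V_cc | exact H |].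
    unfold D1 in Hu, Hx0.
    destruct (V_cc le G a b) as (Er&Es&Et&Ei&Ec). eauto.
Qed.

Theorem lemma4p1 (Omega : Type) (le : Omega -> Omega -> Prop) (G : perm Omega -> Prop)
  (HG : is_lperm_group le G) (Htr : transitive G) (Hample : ample le G)
  (HnoMin : T_no_minimal le G)
  (Delta : Omega -> Prop) (HDelta : inT le G Delta)
  (h : perm Omega) (Hh : Q le G Delta h) :
  (* (a) *)
  (forall (Delta' : Omega -> Prop), inT le G Delta' -> psubset Delta' Delta ->
     ~ set_fixed Delta' h ->
     forall g : perm Omega, rst G Delta' g -> ~ is_id g ->
       (* (i) *)
       (~ is_id (comm (pinvg h) (conj h g)) /\
        (exists k, G k /\ ~ is_id (comm (pinvg h) (conj h k)))) /\
       (* (ii) *)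
       (forall f, G f -> is_id (comm (comm (pinvg h) (conj h g)) f) ->
          set_fixed Delta' f) /\
       (forall f, G f ->
          (forall k, G k -> is_id (comm (comm (pinvg h) (conj h k)) f)) ->
          set_fixed Delta' f)) /\
  (* (b) *)
  (forall beta, act beta h <> beta -> forall f, G f ->
     act beta f = beta \/
     exists g, rst G Delta g /\ ~ is_id (comm (comm (pinvg h) (conj h g)) f)).
Proof.
  pose proof HG as (Hto & Hord & Gone & Gmul & Ginv & _ & _).
  pose proof Hto as (_ & Hantis & _ & _).
  destruct Hh as ((Gh & HhD) & alpha & Halpha & Hkap).
  split.
  - intros Delta' (a & b & Hab & gm & HD') Hps Hnf g Hg Hng.
    destruct (A_core le G Hto Hord Ginv (V le G a b) (V_cc le G a b) Delta' gm HD' h Gh Hnf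
      g Hg Hng) as [Hi Hii].
    split; [split; [exact Hi| exists g; split; [apply Hg | exact Hi]] | split].
    + exact Hii.
    + intros f Gf Hall. apply Hii; auto. apply Hall. apply Hg.
  - intros beta Hb f Gf.
    destruct (classic (act beta f = beta)) as [Hbf|Hbf]; [left; exact Hbf|right].
    assert (Hbeta : Delta beta) by (apply HhD; exact Hb).
    assert (Hbh : Delta (act beta h)).
    { apply NNPP. intro Hn. apply Hb.
      assert (H1 : act (act beta h) h = act beta h) by (apply NNPP; intro H; apply Hn, HhD, H).
      unfold act in H1. exact (pf_inj h _ _ H1). }
    destruct Hkap as (a0 & b0 & Hab0 & Hiff0 & gm0 & HD0).
    set (K := V le G alpha (act alpha h)) in *.
    assert (HKcc : convex_congruence le G K) by apply V_cc.
    assert (HKb : K beta (act beta h)).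
    { pose proof HKcc as (Er&Es&Et&Ei&Ec). apply HD0 in Hbeta. apply HD0 in Hbh. eauto. }
    assert (Huv : exists u v, u <> v /\ (forall x y, V le G u v x y -> V le G beta (act beta h) x y)
       /\ ~ V le G u v beta (act beta h) /\ ~ V le G u v beta (act beta f)).
    { destruct (refineL le G Htr HnoMin beta (act beta h)) as (u1 & v1 & Hne1 & Hs1 & Hn1).
      { intro H. apply Hb. auto. }
      destruct (classic (V le G u1 v1 beta (act beta f))) as [Hy|Hy].
      - destruct (refineL le G Htr HnoMin beta (act beta f)) as (u2 & v2 & Hne2 & Hs2 & Hn2).
        { intro H. apply Hbf. auto. }
        assert (Hc : forall x y, V le G u2 v2 x y -> V le G u1 v1 x y).
        { intros x y H. apply (V_min le G _ _ _ (V_cc le G u1 v1) Hy). auto. }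
        exists u2, v2. split; [exact Hne2|split; [|split]].
        + intros x y H. apply Hs1, Hc, H.
        + intro H. apply Hn1, Hc, H.
        + exact Hn2.
      - exists u1, v1. split; [exact Hne1|split; [exact Hs1|split; [exact Hn1|exact Hy]]]. }
    destruct Huv as (u & v & Hne & Hs & Hn1 & Hn2).
    set (Delta' := fun x => V le G u v beta x).
    assert (HT' : inT le G Delta') by (exists u, v; split; auto; exists beta; intro; tauto).
    destruct (Hample Delta' HT') as (g & (Gg & HgD) & alpha' & Ha' & (a1 & b1 & Hab1 & Hiff1 & _)).
    assert (Hng : ~ is_id g).
    { intro Hid. apply Hab1. apply (V_eq le G Hantis alpha').
      pose proof (proj2 (Hiff1 a1 b1) (V_ab le G a1 b1)) as H. rewrite (Hid alpha') in H. exact H. }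
    assert (Hsub : forall x, Delta' x -> Delta x).
    { intros x Hx. apply HD0. apply HD0 in Hbeta.
      pose proof HKcc as (Er&Es&Et&Ei&Ec).
      apply (Et _ beta); auto. apply (V_min le G K _ _ HKcc HKb). apply Hs. exact Hx. }
    assert (Hnf : ~ set_fixed Delta' h).
    { intro Hsf. apply Hn1. apply (proj1 (Hsf (act beta h))). exists beta. split; [exact (proj1 (V_cc le G u v) beta)|reflexivity]. }
    destruct (A_core le G Hto Hord Ginv (V le G u v) (V_cc le G u v) Delta' beta
      (fun x => iff_refl _) h Gh Hnf g (ltac:(split; [exact Gg|exact HgD]) : rst G Delta' g) Hng) as [_ Hii].
    exists g. split.
    + split; auto.
    + intro Hid. apply (Hii f Gf) in Hid. apply Hn2. apply (proj1 (Hid (act beta f))).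
      exists beta. split; [exact (proj1 (V_cc le G u v) beta)|reflexivity].
Qed.
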